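(* Let $G$ be a multi-player game with arena $(\Pi,V,(V_i)_{i\in\Pi},E)$, payoff functions $f_i:Plays\to P_i$ and strict total orders $\prec_i$ on $P_i$. Assume that for every $i\in\Pi$: (a) for all plays $h\rho,h\rho'$ with $h$ a history, $f_i(\rho)\preceq_i f_i(\rho')$ implies $f_i(h\rho)\preceq_i f_i(h\rho')$; and (b) the two-player zero-sum game $G_i$ has uniform optimal strategies for both players. Then for every $v_0\in V$ there exists a finite-memory Nash equilibrium in $(G,v_0)$.
   Context: An arena is $(\Pi,V,(V_i)_{i\in\Pi},E)$ with $\Pi$ a finite set of players, $V$ a finite set of vertices, $E\subseteq V\times V$ such that every vertex has an outgoing edge, and $(V_i)_{i\in\Pi}$ a partition of $V$ ($V_i$ controlled by player $i$). Plays are infinite paths, histories nonempty finite paths; $Plays(v_0)$, $Hist_i(v_0)$ denote plays from $v_0$ and histories from $v_0$ ending in $V_i$. Each player $i$ has a payoff function $f_i:Plays\to P_i$ and a strict total order $\prec_i$ on $P_i$; $p\preceq_i p'$ means $p\prec_i p'$ or $p=p'$. A strategy of player $i$ from $v_0$ maps each $hv\in Hist_i(v_0)$ to a successor of $v$. It is positional if it depends only on the last vertex, uniform if it is a positional strategy given by a map $v\mapsto\sigma(v)$ on all of $V_i$ (hence usable from every initial vertex), and finite-memory if it can be computed by a finite-state machine reading the history (finitely many memory states, a memory update on each vertex, and the next vertex determined by the current memory state and current vertex). A profile is finite-memory if all its strategies are. The outcome $\langle(\sigma_i)_{i\in\Pi}\rangle_{v_0}$ is the unique play from $v_0$ consistent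 with all strategies. A profile is a Nash equilibrium in $(G,v_0)$ if no player $i$ has a strategy $\sigma'_i$ with $f_i(\langle(\sigma_j)_j\rangle_{v_0})\prec_i f_i(\langle\sigma'_i,\sigma_{-i}\rangle_{v_0})$. The game $G_i$ is the two-player zero-sum game on the same arena where player $i$ (controlling $V_i$, using $f_i$ and $\prec_i$) plays against player $-i$, the coalition of the others (controlling $V\setminus V_i$). Optimal strategies from $v$: a strategy $\tau$ of player $i$ and $\tau'$ of player $-i$ and an element ${val}_i(v)$ such that ${val}_i(v)\preceq_i f_i(\rho)$ for all plays from $v$ consistent with $\tau$ and $f_i(\rho)\preceq_i{val}_i(v)$ for all plays from $v$ consistent with $\tau'$. ''$G_i$ has uniform optimal strategies for both players'' means there are uniform strategies of player $i$ and of player $-i$ that are optimal from every initial vertex $v\in V$. *)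

(* Defs.v *)
From mathcomp Require Import all_boot.
Unset Printing Implicit Defensive.

Section Games.
Variables (Pi V : finType) (own : V -> Pi) (E : rel V).

Definition is_play (rho : nat -> V) : Prop := forall n, E (rho n) (rho n.+1).

Definition catp (h : seq V) (rho : nat -> V) : nat -> V :=
  fun n => if n < size h then nth (rho 0) h n else rho (n - size h).

(* Histories from v0 are represented as v0 :: t with path E v0 t;
   their last vertex is last v0 t. *)
Definition is_strategy (i : Pi) (v0 : V) (sigma : seq V -> V) : Prop :=
  forall t, path E v0 t -> own (last v0 t) = i ->
    E (last v0 t) (sigma (v0 :: t)).

Definition finite_memory (i : Pi) (v0 : V) (sigma : seq V -> V) : Prop :=
  exists (M : finType) (m0 : M) (upd : M -> V -> M) (nxt : M -> V -> V),
    forall t, path E v0 t -> own (last v0 t) = i ->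
      sigma (v0 :: t) = nxt (foldl upd m0 (v0 :: t)) (last v0 t).

Definition profile := Pi -> seq V -> V.

(* Tail (after v0) of the history of length n.+1 generated by a profile. *)
Fixpoint out_tail (prof : profile) (v0 : V) (n : nat) : seq V :=
  match n with
  | 0 => [::]
  | n'.+1 => let t := out_tail prof v0 n' in
             rcons t (prof (own (last v0 t)) (v0 :: t))
  end.

Definition outcome (prof : profile) (v0 : V) : nat -> V :=
  fun n => last v0 (out_tail prof v0 n).

Definition deviate (prof : profile) (i : Pi) (sigma' : seq V -> V) : profile :=
  fun j => if j == i then sigma' else prof j.

Variables (P : Pi -> Type) (lt : forall i, P i -> P i -> Prop).

Definition le (i : Pi) (x y : P i) : Prop := lt i x y \/ x = y.

Definition strict_total_order (T : Type) (r : T -> T -> Prop) : Prop :=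
  (forall x, ~ r x x) /\ (forall x y z, r x y -> r y z -> r x z) /\
  (forall x y, x <> y -> r x y \/ r y x).

Variable (f : forall i, (nat -> V) -> P i).

Definition nash_equilibrium (prof : profile) (v0 : V) : Prop :=
  (forall i, is_strategy i v0 (prof i)) /\
  forall i sigma', is_strategy i v0 sigma' ->
    ~ lt i (f i (outcome prof v0)) (f i (outcome (deviate prof i sigma') v0)).

Definition prefix_monotone (i : Pi) : Prop :=
  forall (h : seq V) (rho rho' : nat -> V), h <> [::] ->
    is_play (catp h rho) -> is_play (catp h rho') ->
    le i (f i rho) (f i rho') -> le i (f i (catp h rho)) (f i (catp h rho')).

(* Uniform (positional, all of V_i) strategies in G_i and consistency. *)
Definition uniform_strategy_i (i : Pi) (s : V -> V) : Prop :=
  forall v, own v = i -> E v (s v).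
Definition uniform_strategy_coal (i : Pi) (s : V -> V) : Prop :=
  forall v, own v <> i -> E v (s v).
Definition consistent_i (i : Pi) (s : V -> V) (rho : nat -> V) : Prop :=
  forall n, own (rho n) = i -> rho n.+1 = s (rho n).
Definition consistent_coal (i : Pi) (s : V -> V) (rho : nat -> V) : Prop :=
  forall n, own (rho n) <> i -> rho n.+1 = s (rho n).

Definition uniform_optimal (i : Pi) : Prop :=
  exists (s s' : V -> V), uniform_strategy_i i s /\ uniform_strategy_coal i s' /\
    forall v, exists val : P i,
      (forall rho, is_play rho -> rho 0 = v -> consistent_i i s rho -> le i val (f i rho)) /\
      (forall rho, is_play rho -> rho 0 = v -> consistent_coal i s' rho -> le i (f i rho) val).

End Games.

(* Main.v *)
Require Import Defs.
From mathcomp Require Import all_boot.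
From Stdlib Require Import IndefiniteDescription FunctionalExtensionality Classical_Prop.

Lemma out_S (Pi V : finType) own (Q : profile Pi V) v0 n :
  outcome Pi V own Q v0 n.+1 =
  Q (own (outcome Pi V own Q v0 n)) (v0 :: out_tail Pi V own Q v0 n).
Proof. by rewrite /outcome /= last_rcons. Qed.

Lemma out_path (Pi V : finType) own E (Q : profile Pi V) v0 :
  (forall j, is_strategy Pi V own E j v0 (Q j)) ->
  forall n, path E v0 (out_tail Pi V own Q v0 n).
Proof.
move=> HQ; elim=> [|n IH] //=.
rewrite rcons_path IH /=; exact: (HQ _ _ IH erefl).
Qed.

Lemma out_play (Pi V : finType) own E (Q : profile Pi V) v0 :
  (forall j, is_strategy Pi V own E j v0 (Q j)) ->
  is_play V E (outcome Pi V own Q v0).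
Proof.
move=> HQ n; have := out_path _ _ _ _ _ _ HQ n.+1.
by rewrite /= rcons_path => /andP[_]; rewrite /outcome /= last_rcons.
Qed.

Lemma le_trans_gen (Pi : finType) (P : Pi -> Type) lt i (x y z : P i) :
  strict_total_order (P i) (lt i) ->
  le Pi P lt i x y -> le Pi P lt i y z -> le Pi P lt i x z.
Proof.
move=> [_ [Htr _]] [H1|->] [H2|<-]; [left; exact: Htr H1 H2|left|left|right] => //.
Qed.

Theorem corollary1 (Pi V : finType) (own : V -> Pi) (E : rel V)
  (HE : forall v, exists w, E v w)
  (P : Pi -> Type) (lt : forall i, P i -> P i -> Prop)
  (Hlt : forall i, strict_total_order (P i) (lt i))
  (f : forall i, (nat -> V) -> P i)
  (Ha : forall i, prefix_monotone Pi V E P lt f i)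
  (Hb : forall i, uniform_optimal Pi V own E P lt f i) :
  forall v0 : V, exists prof : profile Pi V,
    (forall i, finite_memory Pi V own E i v0 (prof i)) /\
    nash_equilibrium Pi V own E P lt f prof v0.
Proof.
move=> v0.
pose c1 i := constructive_indefinite_description _ (Hb i).
pose s i := proj1_sig (c1 i).
pose c2 i := constructive_indefinite_description _ (proj2_sig (c1 i)).
pose s' i := proj1_sig (c2 i).
have HS : forall i, uniform_strategy_i Pi V own E i (s i) /\ uniform_strategy_coal Pi V own E i (s' i) /\ forall v, exists val : P i,
      (forall rho, is_play V E rho -> rho 0 = v ->
          consistent_i Pi V own i (s i) rho -> le Pi P lt i val (f i rho)) /\ (forall rho, is_play V E rho -> rho 0 = v ->
          consistent_coal Pi V own i (s' i) rho -> le Pi P lt i (f i rho) val).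
  move=> i; exact: (proj2_sig (c2 i)).
clearbody s s'.
pose sig u := s (own u) u.
pose upd (m : (option V * option Pi)%type) (v : V) : (option V * option Pi)%type :=
  (Some v, match m.2 with
           | Some k => Some k
           | None => match m.1 with
                     | None => None
                     | Some u => if v == sig u then None else Some (own u)
                     end
           end).
pose m0 : (option V * option Pi)%type := (None, None).
pose nxt (j : Pi) (m : (option V * option Pi)%type) (v : V) : V :=
  match m.2 with
  | Some k => if k != j then s' k v else s j v
  | None => s j v
  end.
pose prof : profile Pi V := fun j h => nxt j (foldl upd m0 h) (last v0 h).
exists prof; split.
  move=> i; exists (option V * option Pi)%type; exists m0, upd, (nxt i).
  by [].
have Hprof : forall j, is_strategy Pi V own E j v0 (prof j).
  move=> j t _ Hown; rewrite /prof /nxt /=.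
  case: (foldl upd m0 (v0 :: t)).2 => [k|].
    case: ifP => Hk.
      have [_ [Hc _]] := HS k; apply: Hc; rewrite Hown; apply/eqP.
      by rewrite eq_sym.
    by have [Hc _] := HS j; apply: Hc.
  by have [Hc _] := HS j; apply: Hc.
pose st (Q : profile Pi V) n := foldl upd m0 (v0 :: out_tail Pi V own Q v0 n).
have st0 : forall Q, st Q 0 = (Some v0, None) by [].
have stS : forall Q n, st Q n.+1 = upd (st Q n) (outcome Pi V own Q v0 n.+1).
  move=> Q n; rewrite /st /= -cats1 foldl_cat /=; congr upd.
  by rewrite /outcome /= last_rcons.
have st1 : forall Q n, (st Q n).1 = Some (outcome Pi V own Q v0 n).
  by move=> Q [|n] //; rewrite stS.
have stN : forall Q n, (st Q n).2 = None -> (st Q n.+1).2 = None ->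
    outcome Pi V own Q v0 n.+1 = sig (outcome Pi V own Q v0 n).
  move=> Q n H1; rewrite stS /= H1 st1.
  by case: eqP.
pose rho := outcome Pi V own prof v0.
have prof_step : forall Q n j, Q j = prof j ->
   Q j (v0 :: out_tail Pi V own Q v0 n) = nxt j (st Q n) (outcome Pi V own Q v0 n).
  by move=> Q n j ->.
have Hrho_st : forall n, (st prof n).2 = None.
  elim=> [|n IH] //; rewrite stS /= IH st1.
  rewrite out_S prof_step // /nxt IH eqxx //.
have Hrho : forall n, rho n.+1 = sig (rho n).
  by move=> n; apply: stN.
have Hrho_play : is_play V E rho.
  by move=> n; rewrite Hrho /sig; have [Hc _] := HS (own (rho n)); apply: Hc.
split=> // i sig' Hsig'.
pose Q := deviate Pi V prof i sig'.
pose pi := outcome Pi V own Q v0.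
have HQ : forall j, is_strategy Pi V own E j v0 (Q j).
  by move=> j; rewrite /Q /deviate; case: eqP => [->|_].
have Hpi_play : is_play V E pi by exact: out_play.
have [Hirr [Htr Htot]] := Hlt i.
suff Hle : le Pi P lt i (f i pi) (f i rho).
  move=> Hlt'; case: Hle => [H|H].
    by apply: (Hirr (f i rho)); apply: Htr Hlt' H.
  by rewrite H in Hlt'; apply: (Hirr _ Hlt').
case: (classic (exists n, (st Q n).2 != None)) => [Hex|Hnex]; last first.
  have Hn : forall n, (st Q n).2 = None.
    move=> n; case E1: (st Q n).2 => [k|] //; case: Hnex; exists n; by rewrite E1.
  have -> : pi = rho.
    apply: functional_extensionality; elim=> [|n IH] //.
    by rewrite /pi stN // Hrho -IH.
  by right.
case: (ex_minnP Hex) => n Pn Hmin.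
case: n Pn Hmin => [|m] Pn Hmin; first by rewrite st0 in Pn.
have Hnone : forall l, l <= m -> (st Q l).2 = None.
  move=> l Hl; case E1: (st Q l).2 => [k|] //.
  have H : m.+1 <= l by apply: Hmin; rewrite E1.
  by rewrite ltnNge Hl in H.
have Heq : forall l, l <= m -> pi l = rho l.
  elim=> [|l IH] Hl //.
  rewrite /pi stN; [|apply: Hnone; exact: ltnW|exact: Hnone].
  rewrite -/pi IH ?Hrho //; exact: ltnW.
have Hm : (st Q m.+1).2 = Some (own (pi m)).
  move: Pn; rewrite stS /= Hnone // st1.
  by rewrite -/pi; case: (pi m.+1 =P sig (pi m)).
have Hdev : pi m.+1 <> sig (pi m).
  by move: Pn; rewrite stS /= Hnone // st1 -/pi; case: (pi m.+1 =P sig (pi m)).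
have Hown : own (pi m) = i.
  apply/eqP; apply/negPn/negP => Hne; apply: Hdev.
  rewrite /pi out_S prof_step; last by rewrite /Q /deviate (negbTE Hne).
  by rewrite /nxt Hnone.
have Hpers : forall l, m < l -> (st Q l).2 = Some i.
  elim=> [|l IH] // Hl.
  case: (ltnP m l) => H; last first.
    have -> : l = m by apply/eqP; rewrite eqn_leq H -ltnS Hl.
    by rewrite Hm Hown.
  by rewrite stS /= IH.
have Hcoal : forall l, m < l -> own (pi l) <> i -> pi l.+1 = s' i (pi l).
  move=> l Hl Hne.
  rewrite /pi out_S prof_step; last by rewrite /Q /deviate; case: eqP.
  rewrite /nxt Hpers //.
  have -> : (i != own (outcome Pi V own Q v0 l)) by apply/eqP => H; apply: Hne; rewrite -H.
  by [].
have [_ [_ Hval]] := HS i.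
have [val [Hlo Hhi]] := Hval (pi m).
have HA : le Pi P lt i val (f i (fun k => rho (m + k))).
  apply: Hlo.
  - move=> k; rewrite addnS; exact: Hrho_play.
  - by rewrite addn0 Heq.
  - by move=> k Hk; rewrite addnS Hrho /sig Hk.
have HB : le Pi P lt i (f i (fun k => pi (m + k))) val.
  apply: Hhi.
  - move=> k; rewrite addnS; exact: Hpi_play.
  - by rewrite addn0.
  - move=> [|k] Hk; first by rewrite addn0 Hown in Hk.
    rewrite addnS; apply: Hcoal => //; by rewrite addnS ltnS leq_addr.
have Hle := le_trans_gen _ _ _ _ _ _ _ (Hlt i) HB HA.
case: (posnP m) => Hm0.
  have EA : (fun k => rho (m + k)) = rho.
    by apply: functional_extensionality => k; rewrite Hm0 add0n.
  have EB : (fun k => pi (m + k)) = pi.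
    by apply: functional_extensionality => k; rewrite Hm0 add0n.
  by rewrite -EA -EB.
pose h := mkseq rho m.
have EA : catp V h (fun k => rho (m + k)) = rho.
  apply: functional_extensionality => k; rewrite /catp size_mkseq.
  by case: ltnP => Hk; [rewrite nth_mkseq | rewrite subnKC].
have EB : catp V h (fun k => pi (m + k)) = pi.
  apply: functional_extensionality => k; rewrite /catp size_mkseq.
  case: ltnP => Hk; last by rewrite subnKC.
  by rewrite nth_mkseq // Heq // ltnW.
have Hh : h <> [::].
  move=> Hh; have := congr1 size Hh; rewrite size_mkseq /= => H0.
  by rewrite H0 ltnn in Hm0.
have := Ha i h (fun k => pi (m + k)) (fun k => rho (m + k)) Hh; rewrite EA EB; apply => //.
Qed.
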